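(* Let $\Omega=\{1,\dots,n\}$ and let $p,q\in\Delta_n=\{r\in\mathbb{R}^n: r\ge 0,\ \sum_i r_i=1\}$. Fix weights $\sigma_1,\dots,\sigma_n\ge 0$ and set $\Sigma=\mathrm{Diag}\{\sigma_1,\dots,\sigma_n\}$. Let $E,E'$ be two disjoint sets of $L$ observations each, drawn i.i.d. from $p$, and $F,F'$ two disjoint sets of $R$ observations each, drawn i.i.d. from $q$, all four sets being mutually independent. Put $\gamma=R/(L+R)$, $\bar\gamma=1-\gamma=L/(L+R)$, $M=2LR/(L+R)$. Let $\omega,\omega',\zeta,\zeta'\in\Delta_n$ be the empirical distributions of $E,E',F,F'$ respectively, let $$\chi=(\omega-\zeta)^T\Sigma(\omega'-\zeta')=\sum_{i=1}^n\sigma_i(\omega_i-\zeta_i)(\omega'_i-\zeta'_i),$$ and let the test $\mathcal T$ claim a difference ($H_1$) if and only if $|\chi|>\ell$. Suppose the threshold satisfies $$\ell\ge 2\sqrt2\,\theta M^{-1}\sqrt{\textstyle\sum_i\sigma_i^2p_i^2}$$ for some $\theta\ge1$. Then: (1) if $p=q$, the probability that $\mathcal T$ claims $H_1$ is at most $1/\theta^2$; (2) if $$\sum_i\sigma_i(p_i-q_i)^2>\ell+2\sqrt2\,\theta\Big[M^{-1/2}\sqrt{\textstyle\sum_i\sigma_i^2(p_i-q_i)^2(\gamma p_i+\bar\gamma q_i)}+M^{-1}\sqrt{\gamma\textstyle\sum_i\sigma_i^2p_i^2+\bar\gamma\sum_i\sigma_i^2q_i^2}\Big],$$ then the probability that $\mathcal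 T$ claims $H_1$ is at least $1-3/\theta^2$.
   Context: The empirical distribution of a finite set of observations with values in $\{1,\dots,n\}$ is the vector in $\Delta_n$ whose $i$-th entry is the fraction of observations equal to $i$. *)

(* Defs.v *)
From HB Require Import structures.
From mathcomp Require Import all_boot all_order all_algebra.
Set Implicit Arguments. Unset Strict Implicit. Unset Printing Implicit Defensive.
Import Order.TTheory GRing.Theory Num.Theory.
Local Open Scope ring_scope.

(* Omega = {1..n} is modelled by 'I_n; a distribution is a function 'I_n -> K. *)
Definition in_simplex (K : realFieldType) (n : nat) (p : 'I_n -> K) : Prop :=
  (forall i, 0 <= p i) /\ \sum_(i < n) p i = 1.

(* A set of L observations is a sample e : 'I_L -> 'I_n (observation k has value e k). *)
Definition empirical (K : realFieldType) (n L : nat) (e : {ffun 'I_L -> 'I_n})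
  : 'I_n -> K := fun i => #|[set k | e k == i]|%:R / L%:R.

Definition sample_prob (K : realFieldType) (n L : nat) (p : 'I_n -> K)
  (e : {ffun 'I_L -> 'I_n}) : K := \prod_(k < L) p (e k).

Definition chi_stat (K : realFieldType) (n : nat) (sigma w w' z z' : 'I_n -> K) : K :=
  \sum_(i < n) sigma i * (w i - z i) * (w' i - z' i).

Definition prob_claim_H1 (K : realFieldType) (n L R : nat) (p q sigma : 'I_n -> K)
  (ell : K) : K :=
  \sum_(E : {ffun 'I_L -> 'I_n}) \sum_(E' : {ffun 'I_L -> 'I_n})
  \sum_(F : {ffun 'I_R -> 'I_n}) \sum_(F' : {ffun 'I_R -> 'I_n})
    (sample_prob p E * sample_prob p E' * sample_prob q F * sample_prob q F') *
    (if ell < `| chi_stat sigma (empirical K E) (empirical K E')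
                              (empirical K F) (empirical K F') |
     then 1 else 0).

(* Main.v *)
Require Import Defs.
From HB Require Import structures.
From mathcomp Require Import all_boot all_order all_algebra.
From mathcomp Require Import lra ring.
Import Order.TTheory GRing.Theory Num.Theory.
Local Open Scope ring_scope.

Set Implicit Arguments. Unset Strict Implicit. Unset Printing Implicit Defensive.

Section Ex.
Variable K : realFieldType.

Definition Ex (T : finType) (w : T -> K) (f : T -> K) := \sum_x w x * f x.

Lemma Ex_ext (T : finType) (w f g : T -> K) : f =1 g -> Ex w f = Ex w g.
Proof. by move=> fg; apply: eq_bigr => z _; rewrite fg. Qed.

Lemma ExD (T : finType) (w f g : T -> K) :
  Ex w (fun z => f z + g z) = Ex w f + Ex w g.
Proof. by rewrite /Ex -big_split /=; apply: eq_bigr => z _; ring. Qed.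

Lemma ExB (T : finType) (w f g : T -> K) :
  Ex w (fun z => f z - g z) = Ex w f - Ex w g.
Proof.
rewrite /Ex (eq_bigr (fun z => w z * f z + (- (w z * g z)))); last by move=> z _; ring.
by rewrite big_split /= sumrN.
Qed.

Lemma ExZ (T : finType) (w f : T -> K) c :
  Ex w (fun z => c * f z) = c * Ex w f.
Proof. by rewrite /Ex mulr_sumr; apply: eq_bigr => z _; ring. Qed.

Lemma Ex_sum (T : finType) (I : finType) (w : T -> K) (f : I -> T -> K) :
  Ex w (fun z => \sum_i f i z) = \sum_i Ex w (f i).
Proof.
rewrite /Ex (eq_bigr (fun z => \sum_i w z * f i z)); last by move=> z _; rewrite mulr_sumr.
by rewrite exchange_big.
Qed.

Lemma Ex_le (T : finType) (w f g : T -> K) :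
  (forall z, 0 <= w z) -> (forall z, f z <= g z) -> Ex w f <= Ex w g.
Proof. by move=> w0 fg; apply: ler_sum => z _; apply: ler_wpM2l. Qed.

Lemma Ex_pair (T1 T2 : finType) (w1 f : T1 -> K) (w2 g : T2 -> K) :
  Ex (fun z : T1 * T2 => w1 z.1 * w2 z.2) (fun z => f z.1 * g z.2) = Ex w1 f * Ex w2 g.
Proof.
rewrite /Ex big_distrlr /= pair_big /=; apply: eq_bigr => z _; ring.
Qed.

Lemma Ex_pair1 (T1 T2 : finType) (w1 f : T1 -> K) (w2 : T2 -> K) :
  Ex (fun z : T1 * T2 => w1 z.1 * w2 z.2) (fun z => f z.1) = Ex w1 f * Ex w2 (fun _ => 1).
Proof. rewrite -Ex_pair; apply: eq_bigr => z _; ring. Qed.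

Lemma Ex_pair2 (T1 T2 : finType) (w1 : T1 -> K) (w2 g : T2 -> K) :
  Ex (fun z : T1 * T2 => w1 z.1 * w2 z.2) (fun z => g z.2) = Ex w1 (fun _ => 1) * Ex w2 g.
Proof. rewrite -Ex_pair; apply: eq_bigr => z _; ring. Qed.

End Ex.


Section Samp.
Variables (K : realFieldType) (n L : nat) (p : 'I_n -> K).
Hypothesis p0 : forall i, 0 <= p i.
Hypothesis p1 : \sum_i p i = 1.
Hypothesis L0 : (0 < L)%N.

Let w := @sample_prob K n L p.
Definition ind (i x : 'I_n) : K := (x == i)%:R.

Lemma w_ge0 E : 0 <= w E.
Proof. by apply: prodr_ge0 => k _. Qed.

Lemma exp_prod (h : 'I_L -> 'I_n -> K) :
  Ex w (fun E => \prod_k h k (E k)) = \prod_k \sum_i p i * h k i.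
Proof.
rewrite bigA_distr_bigA /Ex; apply: eq_bigr => E _.
by rewrite /w /sample_prob -big_split.
Qed.

Lemma sum_ind c (i : 'I_n) : \sum_x c x * ind i x = c i.
Proof.
rewrite (bigD1 i) //= /ind eqxx mulr1 big1 ?addr0 // => x /negbTE ->; by rewrite mulr0.
Qed.

Lemma Ex1 : Ex w (fun _ => 1) = 1.
Proof.
have := exp_prod (fun _ _ => 1).
rewrite big1 // => ->; apply: big1 => k _.
by rewrite (eq_bigr p) // => x _; rewrite mulr1.
Qed.

Lemma E1 (k : 'I_L) i : Ex w (fun E => ind i (E k)) = p i.
Proof.
have := exp_prod (fun k' x => if k' == k then ind i x else 1).
rewrite (bigD1 k) //= eqxx sum_ind big1 ?mulr1; last first.
  move=> k' /negbTE ->; by rewrite (eq_bigr p) // => x _; rewrite mulr1.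
move=> <-; apply: eq_bigr => E _.
by rewrite (bigD1 k) //= eqxx big1 ?mulr1 // => k' /negbTE ->.
Qed.

Lemma E2 (k k' : 'I_L) i j : k != k' ->
  Ex w (fun E => ind i (E k) * ind j (E k')) = p i * p j.
Proof.
move=> kk; have kk' : k' != k by rewrite eq_sym.
have := exp_prod (fun k0 x => if k0 == k then ind i x else if k0 == k' then ind j x else 1).
rewrite (bigD1 k) //= eqxx sum_ind (bigD1 k') /=; last by rewrite eq_sym.
rewrite (negbTE kk') eqxx sum_ind big1 ?mulr1; last first.
  move=> k0 /andP[/negbTE -> /negbTE ->]; by rewrite (eq_bigr p) // => x _; rewrite mulr1.
move=> <-; apply: eq_bigr => E _.
rewrite (bigD1 k) //= eqxx (bigD1 k') /=; last by rewrite eq_sym.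
rewrite (negbTE kk') eqxx big1 ?mulr1 // => k0 /andP[/negbTE -> /negbTE ->] //.
Qed.

Lemma E2same (k : 'I_L) i j :
  Ex w (fun E => ind i (E k) * ind j (E k)) = (i == j)%:R * p i.
Proof.
rewrite -(E1 k) -ExZ; apply: eq_bigr => E _; congr (_ * _).
rewrite /ind; have [->|xi] := eqVneq (E k) i; last by rewrite mul0r mulr0.
by rewrite mul1r mulr1 eq_sym.
Qed.

Lemma emp_sum (E : {ffun 'I_L -> 'I_n}) i :
  empirical K E i = L%:R^-1 * \sum_k ind i (E k).
Proof.
rewrite /empirical mulrC; congr (_ * _).
rewrite -sum1dep_card natr_sum big_mkcond /=; apply: eq_bigr => k _.
by rewrite /ind; case: (E k == i).
Qed.

Lemma sum_ifeq (k : 'I_L) (a b : K) :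
  \sum_k' (if k == k' then a else b) = a + (L%:R - 1) * b.
Proof.
rewrite (eq_bigr (fun k' => b + (k == k')%:R * (a - b))); last first.
  by move=> k' _; case: (k == k'); rewrite /= ?mul1r ?mul0r; ring.
rewrite big_split /= sumr_const card_ord (bigD1 k) //= eqxx mul1r big1 ?addr0; last first.
  by move=> k' ; rewrite eq_sym => /negbTE ->; rewrite mul0r.
rewrite -mulr_natr; ring.
Qed.

Lemma M1 i : Ex w (fun E => empirical K E i) = p i.
Proof.
rewrite (Ex_ext w (g := fun E => L%:R^-1 * \sum_k ind i (E k))); last by move=> E; rewrite emp_sum.
rewrite ExZ Ex_sum (eq_bigr (fun _ => p i)); last by move=> k _; rewrite E1.
rewrite sumr_const card_ord -mulr_natr.
have L0' : (L%:R : K) != 0 by rewrite pnatr_eq0 -lt0n.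
by field.
Qed.

Lemma M2 i j : Ex w (fun E => empirical K E i * empirical K E j) =
  p i * p j + ((i == j)%:R * p i - p i * p j) / L%:R.
Proof.
rewrite (Ex_ext w (g := fun E => L%:R^-1 * L%:R^-1 *
      \sum_k \sum_k' ind i (E k) * ind j (E k'))); last first.
  move=> E; rewrite !emp_sum -big_distrlr /=; ring.
rewrite ExZ Ex_sum.
rewrite (eq_bigr (fun k => \sum_k' (if k == k' then (i == j)%:R * p i else p i * p j))); last first.
  move=> k _; rewrite Ex_sum; apply: eq_bigr => k' _.
  case: eqP => [<-|/eqP kk]; [exact: E2same | exact: E2].
rewrite (eq_bigr (fun _ => (i == j)%:R * p i + (L%:R - 1) * (p i * p j))); last first.
  by move=> k _; rewrite sum_ifeq.
rewrite sumr_const card_ord -mulr_natr.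
have L0' : (L%:R : K) != 0 by rewrite pnatr_eq0 -lt0n.
by field.
Qed.

End Samp.


Section Two.
Variables (K : realFieldType) (n L R : nat) (p q sigma : 'I_n -> K).

Definition TA := ({ffun 'I_L -> 'I_n} * {ffun 'I_R -> 'I_n})%type.
Definition wA (z : TA) : K := sample_prob p z.1 * sample_prob q z.2.
Definition aa (i : 'I_n) (z : TA) : K := empirical K z.1 i - empirical K z.2 i.
Definition wB (z : TA * TA) : K := wA z.1 * wA z.2.
Definition chiB (z : TA * TA) : K := \sum_i sigma i * aa i z.1 * aa i z.2.

Lemma prob_eq ell : prob_claim_H1 L R p q sigma ell =
  Ex wB (fun z => if ell < `|chiB z| then 1 else 0).
Proof.
rewrite /prob_claim_H1.
under eq_bigr => E _ do rewrite exchange_big /=.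
under eq_bigr => E _ do under eq_bigr => F _ do rewrite pair_bigA /=.
rewrite pair_bigA /= /Ex pair_bigA /=.
apply: eq_bigr => z _; rewrite /wB /wA /chiB /aa /chi_stat; congr (_ * _); ring.
Qed.

End Two.

Section Mom.
Variables (K : realFieldType) (n L R : nat) (p q sigma : 'I_n -> K).
Hypotheses (p0 : forall i, 0 <= p i) (p1 : \sum_i p i = 1).
Hypotheses (q0 : forall i, 0 <= q i) (q1 : \sum_i q i = 1).
Hypotheses (L0 : (0 < L)%N) (R0 : (0 < R)%N).

Local Notation wA := (@wA K n L R p q).
Local Notation aa := (@aa K n L R).
Local Notation wB := (@wB K n L R p q).
Local Notation chiB := (@chiB K n L R sigma).

Local Notation wp := (@sample_prob K n L p).
Local Notation wq := (@sample_prob K n R q).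

Definition PP (r : 'I_n -> K) i j := (i == j)%:R * r i - r i * r j.

Lemma ExA1 : Ex wA (fun _ => 1) = 1.
Proof.
rewrite (Ex_ext wA (g := fun z : TA n L R => (fun _ => 1) z.1 * (fun _ => 1) z.2)); last by move=> z; rewrite mulr1.
by rewrite (Ex_pair wp (fun _ => 1) wq (fun _ => 1)) !Ex1 // mulr1.
Qed.

Lemma mA i : Ex wA (aa i) = p i - q i.
Proof.
rewrite /aa (ExB wA (fun z : TA n L R => empirical K z.1 i) (fun z => empirical K z.2 i)).
have -> : Ex wA (fun z : TA n L R => empirical K z.1 i) = p i.
  by rewrite (Ex_pair1 wp (fun E => empirical K E i) wq) M1 // Ex1 // mulr1.
by rewrite (Ex_pair2 wp wq (fun E => empirical K E i)) M1 // Ex1 // mul1r.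
Qed.

Lemma mAA i j : Ex wA (fun z => aa i z * aa j z) =
  (p i - q i) * (p j - q j) + PP p i j / L%:R + PP q i j / R%:R.
Proof.
rewrite (Ex_ext wA (g := fun z : TA n L R =>
   ((empirical K z.1 i * empirical K z.1 j - empirical K z.1 i * empirical K z.2 j)
   - empirical K z.2 i * empirical K z.1 j) + empirical K z.2 i * empirical K z.2 j)); last first.
  by move=> z; rewrite /aa; ring.
rewrite ExD !ExB.
rewrite (Ex_pair1 wp (fun E => empirical K E i * empirical K E j) wq).
rewrite (Ex_pair2 wp wq (fun E => empirical K E i * empirical K E j)).
rewrite (Ex_pair wp (fun E => empirical K E i) wq (fun E => empirical K E j)).
rewrite (Ex_ext _ (g := fun z : TA n L R => empirical K z.1 j * empirical K z.2 i)); last by move=> z; ring.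
rewrite (Ex_pair wp (fun E => empirical K E j) wq (fun E => empirical K E i)).
rewrite !M1 // !M2 // !Ex1 // /PP; ring.
Qed.

Definition mm i j := (p i - q i) * (p j - q j) + PP p i j / L%:R + PP q i j / R%:R.

Lemma ExB1 : Ex wB (fun _ => 1) = 1.
Proof.
rewrite (Ex_ext wB (g := fun z : TA n L R * TA n L R => (fun _ => 1) z.1 * (fun _ => 1) z.2)); last by move=> z; rewrite mulr1.
by rewrite (Ex_pair wA (fun _ => 1) wA (fun _ => 1)) !ExA1 mulr1.
Qed.

Lemma ExB_chi : Ex wB chiB = \sum_i sigma i * (p i - q i) ^+ 2.
Proof.
rewrite /chiB Ex_sum; apply: eq_bigr => i _.
rewrite (Ex_ext wB (g := fun z : TA n L R * TA n L R => sigma i * (aa i z.1 * aa i z.2))); last by move=> z; ring.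
by rewrite ExZ (Ex_pair wA (aa i) wA (aa i)) !mA expr2.
Qed.

Lemma ExB_chi2 : Ex wB (fun z => chiB z ^+ 2) = \sum_i \sum_j sigma i * sigma j * mm i j ^+ 2.
Proof.
rewrite (Ex_ext wB (g := fun z : TA n L R * TA n L R => \sum_i \sum_j sigma i * sigma j *
   ((fun y => aa i y * aa j y) z.1 * (fun y => aa i y * aa j y) z.2))); last first.
  by move=> z; rewrite /chiB expr2 big_distrlr /=; apply: eq_bigr => i _; apply: eq_bigr => j _; ring.
rewrite Ex_sum; apply: eq_bigr => i _; rewrite Ex_sum; apply: eq_bigr => j _.
by rewrite ExZ (Ex_pair wA (fun y => aa i y * aa j y) wA (fun y => aa i y * aa j y)) mAA expr2.
Qed.

End Mom.


Section Ineq.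
Variables (K : realFieldType) (n : nat) (sigma : 'I_n -> K).
Hypothesis s0 : forall i, 0 <= sigma i.

Definition DS (f : 'I_n -> 'I_n -> K) := \sum_i \sum_j f i j.

Lemma DS_ext f g : (forall i j, f i j = g i j) -> DS f = DS g.
Proof. by move=> fg; apply: eq_bigr => i _; apply: eq_bigr => j _. Qed.

Lemma DS_le f g : (forall i j, f i j <= g i j) -> DS f <= DS g.
Proof. by move=> fg; apply: ler_sum => i _; apply: ler_sum => j _. Qed.

Lemma DSD f g : DS (fun i j => f i j + g i j) = DS f + DS g.
Proof. rewrite /DS -big_split; apply: eq_bigr => i _; by rewrite big_split. Qed.

Lemma DSZ f c : DS (fun i j => c * f i j) = c * DS f.
Proof. rewrite /DS mulr_sumr; apply: eq_bigr => i _; by rewrite mulr_sumr. Qed.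

Lemma DS_diag (g : 'I_n -> K) : DS (fun i j => (i == j)%:R * g i) = \sum_i g i.
Proof.
apply: eq_bigr => i _; rewrite (bigD1 i) //= eqxx mul1r big1 ?addr0 //.
by move=> j; rewrite eq_sym => /negbTE ->; rewrite mul0r.
Qed.

Lemma DS_prod (g h : 'I_n -> K) : DS (fun i j => g i * h j) = (\sum_i g i) * \sum_j h j.
Proof. by rewrite /DS big_distrlr. Qed.

Lemma DS_swap f : DS f = DS (fun i j => f j i).
Proof. by rewrite /DS exchange_big. Qed.

Variable r : 'I_n -> K.
Hypotheses (r0 : forall i, 0 <= r i) (r1 : \sum_i r i = 1).

Lemma r_le1 i : r i <= 1.
Proof.
rewrite -r1 (bigD1 i) //= lerDl; apply: sumr_ge0 => j _; exact: r0.
Qed.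

Lemma sum_r2 : \sum_i r i ^+ 2 <= 1.
Proof.
rewrite -r1; apply: ler_sum => i _.
have := r_le1 i; have := r0 i; nra.
Qed.

Definition SS := \sum_i sigma i ^+ 2 * r i ^+ 2.

Lemma SS_ge0 : 0 <= SS.
Proof. apply: sumr_ge0 => i _; apply: mulr_ge0; exact: sqr_ge0. Qed.

Lemma I1 : DS (fun i j => sigma i * sigma j * PP r i j ^+ 2) <= 2 * SS.
Proof.
apply: (@le_trans _ _ (DS (fun i j => (i == j)%:R * (sigma i ^+ 2 * r i ^+ 2) +
   2^-1 * ((sigma i ^+ 2 * r i ^+ 2) * r j ^+ 2 + r i ^+ 2 * (sigma j ^+ 2 * r j ^+ 2))))).
  apply: DS_le => i j; rewrite /PP.
  have := r0 i; have := r0 j; have := s0 i; have := s0 j.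
  have [->|ij] := eqVneq i j; rewrite /= ?eqxx ?mul1r ?mul0r ?add0r ?sub0r.
    move=> *; have h : 0 <= sigma j ^+ 2 * r j ^+ 3 by apply: mulr_ge0; [exact: sqr_ge0| exact: exprn_ge0].
    rewrite -subr_ge0; set Z := (X in 0 <= X).
    have -> : Z = 2 * (sigma j ^+ 2 * r j ^+ 3) by rewrite /Z; field.
    lra.
  move=> *; rewrite sqrrN.
  have h := mulr_ge0 (sqr_ge0 (r i * r j)) (sqr_ge0 (sigma i - sigma j)).
  rewrite -subr_ge0; set Z := (X in 0 <= X).
  have -> : Z = (r i * r j) ^+ 2 * (sigma i - sigma j) ^+ 2 / 2 by rewrite /Z; field.
  lra.
rewrite DSD DS_diag DSZ DSD DS_prod DS_prod.
have h := sum_r2; have h2 := SS_ge0; rewrite /SS in h2 *.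
set s := \sum_i _; set t := \sum_i _.
have h3 : s * t <= s * 1 by apply: ler_wpM2l.
have -> : s + 2^-1 * (s * t + t * s) = s + s * t by field.
lra.
Qed.

Variable d : 'I_n -> K.

Lemma I2 : DS (fun i j => sigma i * sigma j * (d i * d j * PP r i j)) <=
           \sum_i sigma i ^+ 2 * d i ^+ 2 * r i.
Proof.
rewrite (DS_ext (g := fun i j => (i == j)%:R * (sigma i ^+ 2 * d i ^+ 2 * r i) +
     (-1) * ((sigma i * d i * r i) * (sigma j * d j * r j)))); last first.
  move=> i j; rewrite /PP; have [->|ij] := eqVneq i j; rewrite /= ?mul1r ?mul0r; ring.
rewrite DSD DS_diag DSZ DS_prod.
set s := \sum_i _; set t := \sum_i _.
have : 0 <= t * t by nra.
lra.
Qed.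

End Ineq.


Section Cheb.
Variables (K : realFieldType) (T : finType) (w f : T -> K).
Hypothesis w0 : forall z, 0 <= w z.

Lemma cheb1 ell : 0 < ell ->
  Ex w (fun z => if ell < `|f z| then 1 else 0) <= Ex w (fun z => f z ^+ 2) / ell ^+ 2.
Proof.
move=> l0; have l2 : 0 < ell ^+ 2 by apply: exprn_gt0.
rewrite ler_pdivlMr // mulrC -ExZ; apply: Ex_le => // z.
have hn := normr_ge0 (f z); have hk := real_normK (num_real (f z)).
case: ifP => [lt|_]; last by rewrite mulr0 sqr_ge0.
rewrite mulr1 -hk; nra.
Qed.

Lemma cheb0 : Ex w (fun z => f z ^+ 2) <= 0 ->
  Ex w (fun z => if 0 < `|f z| then 1 else 0) <= 0.
Proof.
move=> h.
have e : Ex w (fun z => f z ^+ 2) = 0.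
  apply/eqP; rewrite eq_le h /=; apply: sumr_ge0 => z _; apply: mulr_ge0 => //; exact: sqr_ge0.
have hz := psumr_eq0P (fun z _ => mulr_ge0 (w0 z) (sqr_ge0 (f z))) e.
rewrite le_eqVlt; apply/orP; left; apply/eqP; apply: big1 => z _.
have := hz z isT; have [->|nz] := eqVneq (f z) 0; first by rewrite normr0 ltxx mulr0.
move/eqP; rewrite mulf_eq0 expf_eq0 /= (negbTE nz) orbF => /eqP ->; by rewrite mul0r.
Qed.

Lemma cheb2 ell D : Ex w (fun _ => 1) = 1 -> ell < D ->
  1 - Ex w (fun z => if ell < `|f z| then 1 else 0) <= Ex w (fun z => (f z - D) ^+ 2) / (D - ell) ^+ 2.
Proof.
move=> e1 lD; have l2 : 0 < (D - ell) ^+ 2 by apply: exprn_gt0; rewrite subr_gt0.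
rewrite -{1}e1 -ExB ler_pdivlMr // mulrC -ExZ; apply: Ex_le => // z.
have hn := ler_norm (f z).
case: ifP => [_|/negbT]; first by rewrite subrr mulr0 sqr_ge0.
rewrite -leNgt => hle; rewrite subr0 mulr1; nra.
Qed.

End Cheb.


Unset Implicit Arguments. Set Strict Implicit.
Theorem proposition1 (K : rcfType) (n L R : nat) (p q sigma : 'I_n -> K)
  (ell theta : K) :
  (0 < L)%N -> (0 < R)%N ->
  in_simplex p -> in_simplex q ->
  (forall i, 0 <= sigma i) ->
  1 <= theta ->
  let gamma : K := R%:R / (L + R)%:R in
  let gammab : K := 1 - gamma in
  let M : K := 2 * L%:R * R%:R / (L + R)%:R in
  2 * Num.sqrt 2 * theta * M^-1 * Num.sqrt (\sum_(i < n) sigma i ^+ 2 * p i ^+ 2) <= ell ->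
  (p = q -> prob_claim_H1 L R p q sigma ell <= 1 / theta ^+ 2) /\
  (\sum_(i < n) sigma i * (p i - q i) ^+ 2 >
     ell + 2 * Num.sqrt 2 * theta *
       ((Num.sqrt M)^-1 *
          Num.sqrt (\sum_(i < n) sigma i ^+ 2 * (p i - q i) ^+ 2 *
                                 (gamma * p i + gammab * q i))
        + M^-1 * Num.sqrt (gamma * \sum_(i < n) sigma i ^+ 2 * p i ^+ 2
                           + gammab * \sum_(i < n) sigma i ^+ 2 * q i ^+ 2)) ->
   1 - 3 / theta ^+ 2 <= prob_claim_H1 L R p q sigma ell).
Proof.
move=> L0 R0 [p0 p1] [q0 q1] s0 th1 gamma gammab M hl.
have Lp : (0 : K) < L%:R by rewrite ltr0n.
have Rp : (0 : K) < R%:R by rewrite ltr0n.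
have L0' : (L%:R : K) != 0 by rewrite lt0r_neq0.
have R0' : (R%:R : K) != 0 by rewrite lt0r_neq0.
have LR0' : (L%:R + R%:R : K) != 0 by rewrite lt0r_neq0 // addr_gt0.
have RL0' : (R%:R + L%:R : K) != 0 by rewrite addrC.
pose u : K := (L%:R)^-1; pose v : K := (R%:R)^-1.
have hu : 0 < u by rewrite invr_gt0.
have hv : 0 < v by rewrite invr_gt0.
have huv : 0 < u + v by rewrite addr_gt0.
have huv' : u + v != 0 by rewrite lt0r_neq0.
have huv2 : (L%:R^-1 + R%:R^-1 : K) != 0 by [].
have hMi : M^-1 = (u + v) / 2.
  by rewrite /M /u /v natrD; field; rewrite ?L0' ?R0' ?LR0' ?RL0' ?huv2.
have hM : M = 2 / (u + v).
  by rewrite /M /u /v natrD; field; rewrite ?L0' ?R0' ?LR0' ?RL0' ?huv2.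
have hM0 : 0 < M by rewrite hM divr_gt0.
have hg : gamma = u / (u + v).
  by rewrite /gamma /u /v natrD; field; rewrite ?L0' ?R0' ?LR0' ?RL0' ?huv2.
have hgb : gammab = v / (u + v).
  by rewrite /gammab hg /u /v; field; rewrite ?L0' ?R0' ?LR0' ?RL0' ?huv2.
have th0 : 0 < theta by apply: lt_le_trans th1.
have th2 : 0 < theta ^+ 2 by apply: exprn_gt0.
have s2 : Num.sqrt (2 : K) ^+ 2 = 2 by rewrite sqr_sqrtr.
have s2p : 0 < Num.sqrt (2 : K) by rewrite sqrtr_gt0.
have wB0 : forall z : TA n L R * TA n L R, 0 <= @wB K n L R p q z.
  move=> z; apply: mulr_ge0; apply: mulr_ge0; exact: w_ge0.
rewrite prob_eq.
split.
- move=> epq; subst q.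
  set S := \sum_i sigma i ^+ 2 * p i ^+ 2 in hl *.
  have hS0 : 0 <= S := SS_ge0 sigma p.
  have E2 : Ex (@wB K n L R p p) (fun z => chiB sigma z ^+ 2) <= (u + v) ^+ 2 * (2 * S).
    rewrite ExB_chi2 //.
    have -> : \sum_i \sum_j sigma i * sigma j * mm L R p p i j ^+ 2 =
        (u + v) ^+ 2 * DS (fun i j => sigma i * sigma j * PP p i j ^+ 2).
      rewrite -DSZ; apply: DS_ext => i j; rewrite /mm subrr mul0r add0r /u /v; ring.
    apply: ler_wpM2l; [exact: exprn_ge0 (ltW huv) | exact: I1].
  rewrite hMi in hl.
  have eqX : 2 * Num.sqrt 2 * theta * ((u + v) / 2) * Num.sqrt S =
     Num.sqrt 2 * theta * (u + v) * Num.sqrt S by field.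
  rewrite eqX in hl.
  set X := Num.sqrt 2 * theta * (u + v) * Num.sqrt S in hl.
  have X0 : 0 <= X.
    apply: mulr_ge0; last exact: sqrtr_ge0.
    by apply: mulr_ge0; [apply: mulr_ge0; exact: ltW | exact: ltW].
  have eX : X ^+ 2 = 2 * theta ^+ 2 * (u + v) ^+ 2 * S.
    by rewrite /X !exprMn s2 sqr_sqrtr //; ring.
  have [lpos|lle0] := ltrP 0 ell.
  + apply: le_trans; first by apply: cheb1.
    rewrite ler_pdivrMr; last exact: exprn_gt0.
    apply: le_trans E2 _.
    have hXl : X ^+ 2 <= ell ^+ 2 by nra.
    have -> : (u + v) ^+ 2 * (2 * S) = X ^+ 2 / theta ^+ 2.
      by rewrite eX; field; rewrite gt_eqF.
    rewrite mul1r [_^-1 * _]mulrC; apply: ler_wpM2r => //.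
    by rewrite invr_ge0 ltW.
  + have ell0 : ell = 0 by lra.
    have X00 : X = 0 by lra.
    have : Num.sqrt S == 0.
      by move/eqP: X00; rewrite /X !mulf_eq0 (gt_eqF s2p) (gt_eqF th0) (gt_eqF huv).
    rewrite sqrtr_eq0 => S0.
    have E20 : Ex (@wB K n L R p p) (fun z => chiB sigma z ^+ 2) <= 0.
      apply: le_trans E2 _; have := exprn_ge0 2 (ltW huv); nra.
    subst ell; apply: le_trans (cheb0 wB0 E20) _.
    by rewrite mul1r invr_ge0 ltW.
- move=> hyp.
  set D := \sum_i sigma i * (p i - q i) ^+ 2 in hyp *.
  set Sp := \sum_i sigma i ^+ 2 * p i ^+ 2 in hl hyp.
  set Sq := \sum_i sigma i ^+ 2 * q i ^+ 2 in hyp.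
  pose Tp := \sum_i sigma i ^+ 2 * (p i - q i) ^+ 2 * p i.
  pose Tq := \sum_i sigma i ^+ 2 * (p i - q i) ^+ 2 * q i.
  have eA : \sum_i sigma i ^+ 2 * (p i - q i) ^+ 2 * (gamma * p i + gammab * q i) =
      gamma * Tp + gammab * Tq.
    by rewrite /Tp /Tq !mulr_sumr -big_split; apply: eq_bigr => i _ /=; ring.
  rewrite eA in hyp.
  have Sp0 : 0 <= Sp := SS_ge0 sigma p.
  have Sq0 : 0 <= Sq := SS_ge0 sigma q.
  have Tp0 : 0 <= Tp.
    by apply: sumr_ge0 => i _; apply: mulr_ge0 => //; apply: mulr_ge0; exact: sqr_ge0.
  have Tq0 : 0 <= Tq.
    by apply: sumr_ge0 => i _; apply: mulr_ge0 => //; apply: mulr_ge0; exact: sqr_ge0.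
  have g0 : 0 <= gamma by rewrite hg divr_ge0 // ltW.
  have gb0 : 0 <= gammab by rewrite hgb divr_ge0 // ltW.
  have At0 : 0 <= gamma * Tp + gammab * Tq by apply: addr_ge0; apply: mulr_ge0.
  have Bt0 : 0 <= gamma * Sp + gammab * Sq by apply: addr_ge0; apply: mulr_ge0.
  set a := (Num.sqrt M)^-1 * Num.sqrt (gamma * Tp + gammab * Tq) in hyp.
  set b := M^-1 * Num.sqrt (gamma * Sp + gammab * Sq) in hyp.
  have a0 : 0 <= a by rewrite /a mulr_ge0 // ?invr_ge0 sqrtr_ge0.
  have b0 : 0 <= b by rewrite /b mulr_ge0 // ?invr_ge0 ?sqrtr_ge0 // ltW.
  have ea : a ^+ 2 = (u * Tp + v * Tq) / 2.
    rewrite /a exprMn exprVn !sqr_sqrtr //; last exact: ltW.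
    by rewrite hM hg hgb; field.
  have eb : b ^+ 2 = (u + v) * (u * Sp + v * Sq) / 4.
    by rewrite /b exprMn sqr_sqrtr // exprVn hM hg hgb; field.
  have hlt : ell < D.
    have : 0 <= 2 * Num.sqrt 2 * theta * (a + b).
      by apply: mulr_ge0; [apply: mulr_ge0; [apply: mulr_ge0 => //; exact: ltW | exact: ltW] | exact: addr_ge0].
    lra.
  have eV : Ex (@wB K n L R p q) (fun z => (chiB sigma z - D) ^+ 2) =
      DS (fun i j => sigma i * sigma j * mm L R p q i j ^+ 2) - D ^+ 2.
    rewrite (Ex_ext _ (g := fun z => chiB sigma z ^+ 2 + ((-2 * D) * chiB sigma z + D ^+ 2 * 1))); last first.
      by move=> z; ring.
    rewrite !ExD !ExZ ExB_chi2 // ExB_chi // ExB1 // -/D /DS; ring.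
  have hV : DS (fun i j => sigma i * sigma j * mm L R p q i j ^+ 2) - D ^+ 2 <=
      4 * u ^+ 2 * Sp + 4 * v ^+ 2 * Sq + 2 * u * Tp + 2 * v * Tq.
    pose d i := p i - q i.
    have eD : D ^+ 2 = DS (fun i j => (sigma i * d i ^+ 2) * (sigma j * d j ^+ 2)).
      by rewrite DS_prod expr2.
    rewrite eD.
    set f1 := (fun i j => sigma i * sigma j * mm L R p q i j ^+ 2).
    set f2 := (fun i j => (sigma i * d i ^+ 2) * (sigma j * d j ^+ 2)).
    have -> : DS f1 - DS f2 = DS (fun i j => f1 i j + (-1) * f2 i j) by rewrite DSD DSZ; ring.
    apply: le_trans (DS_le (g := fun i j =>
        (2 * u ^+ 2) * (sigma i * sigma j * PP p i j ^+ 2) +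
        ((2 * v ^+ 2) * (sigma i * sigma j * PP q i j ^+ 2) +
        ((2 * u) * (sigma i * sigma j * (d i * d j * PP p i j)) +
         (2 * v) * (sigma i * sigma j * (d i * d j * PP q i j))))) _) _.
      move=> i j; rewrite /f1 /f2 /mm /d -/u -/v -subr_ge0.
      set Z := (X in 0 <= X).
      have -> : Z = sigma i * sigma j * (u * PP p i j - v * PP q i j) ^+ 2 by rewrite /Z; ring.
      by apply: mulr_ge0; [exact: mulr_ge0 | exact: sqr_ge0].
    rewrite !DSD !DSZ.
    have k1 : 2 * u ^+ 2 * DS (fun i j => sigma i * sigma j * PP p i j ^+ 2) <= 2 * u ^+ 2 * (2 * Sp).
      by apply: ler_wpM2l; [rewrite mulr_ge0 // exprn_ge0 // ltW | exact: I1].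
    have k2 : 2 * v ^+ 2 * DS (fun i j => sigma i * sigma j * PP q i j ^+ 2) <= 2 * v ^+ 2 * (2 * Sq).
      by apply: ler_wpM2l; [rewrite mulr_ge0 // exprn_ge0 // ltW | exact: I1].
    have k3 : 2 * u * DS (fun i j => sigma i * sigma j * (d i * d j * PP p i j)) <= 2 * u * Tp.
      by apply: ler_wpM2l; [rewrite mulr_ge0 // ltW | exact: I2].
    have k4 : 2 * v * DS (fun i j => sigma i * sigma j * (d i * d j * PP q i j)) <= 2 * v * Tq.
      by apply: ler_wpM2l; [rewrite mulr_ge0 // ltW | exact: I2].
    lra.
  have c2 := cheb2 (chiB sigma) wB0 (ExB1 L R p1 q1) hlt.
  rewrite eV in c2.
  set Var := DS _ - D ^+ 2 in c2 hV.
  have hV16 : 4 * u ^+ 2 * Sp + 4 * v ^+ 2 * Sq + 2 * u * Tp + 2 * v * Tq <= 16 * (a + b) ^+ 2.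
    have ab0 : 0 <= a * b by apply: mulr_ge0.
    have e16 : 16 * (a + b) ^+ 2 = 16 * a ^+ 2 + 32 * (a * b) + 16 * b ^+ 2 by ring.
    rewrite e16 ea eb.
    have m1 : 0 <= u * Tp by apply: mulr_ge0 => //; exact: ltW.
    have m2 : 0 <= v * Tq by apply: mulr_ge0 => //; exact: ltW.
    have m3 : 0 <= u * v * Sp by apply: mulr_ge0 => //; apply: mulr_ge0; exact: ltW.
    have m4 : 0 <= u * v * Sq by apply: mulr_ge0 => //; apply: mulr_ge0; exact: ltW.
    have -> : 16 * ((u * Tp + v * Tq) / 2) + 32 * (a * b) + 16 * ((u + v) * (u * Sp + v * Sq) / 4)
       = 8 * (u * Tp) + 8 * (v * Tq) + 32 * (a * b) + 4 * u ^+ 2 * Sp + 4 * v ^+ 2 * Sq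
         + 4 * (u * v * Sp) + 4 * (u * v * Sq) by field.
    have -> : 2 * u * Tp = 2 * (u * Tp) by ring.
    have -> : 2 * v * Tq = 2 * (v * Tq) by ring.
    lra.
  have hDl : 8 * theta ^+ 2 * (a + b) ^+ 2 <= (D - ell) ^+ 2.
    have Y0 : 0 <= 2 * Num.sqrt 2 * theta * (a + b).
      by apply: mulr_ge0; [apply: mulr_ge0; [apply: mulr_ge0 => //; exact: ltW | exact: ltW] | exact: addr_ge0].
    have YD : 2 * Num.sqrt 2 * theta * (a + b) <= D - ell by lra.
    have eY : (2 * Num.sqrt 2 * theta * (a + b)) ^+ 2 = 8 * theta ^+ 2 * (a + b) ^+ 2.
      by rewrite !exprMn s2; ring.
    rewrite -eY; move: Y0 YD; set Y := 2 * _ * _ * _; move=> Y0 YD; nra.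
  have hQ : Var / (D - ell) ^+ 2 <= 3 / theta ^+ 2.
    have Dl0 : 0 < (D - ell) ^+ 2 by apply: exprn_gt0; rewrite subr_gt0.
    rewrite ler_pdivrMr //.
    have -> : 3 / theta ^+ 2 * (D - ell) ^+ 2 = (3 * (D - ell) ^+ 2) / theta ^+ 2 by ring.
    rewrite ler_pdivlMr //.
    have ab2 : 0 <= (a + b) ^+ 2 by apply: sqr_ge0.
    have : Var * theta ^+ 2 <= 16 * (a + b) ^+ 2 * theta ^+ 2.
      by apply: ler_wpM2r; [exact: ltW | lra].
    nra.
  lra.
Qed.
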